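(* Consider the contextual second-price pay-per-click auction problem described in the context, with a finite CTR predictor class $\mathcal{F}$ satisfying the realizability assumption. Run the exponential-weights algorithm described in the context with the IPS loss estimator and learning rate $\eta=\sqrt{\frac{\log|\mathcal{F}|}{\sum_{t=1}^T N_t}}$. Then $$\mathbb{E}[\mathrm{Reg}] = O\Big(\sqrt{\textstyle\sum_{t=1}^T N_t\log|\mathcal{F}|}\Big)=O\big(\sqrt{NT\log|\mathcal{F}|}\big),$$ where the $O(\cdot)$ hides only an absolute constant.
   Context: Notation: for a vector $v$, $\max_i v_i$ and $\mathrm{smax}_i v_i$ denote the largest and second-largest entries, and $\arg\max_i v_i$, $\arg\mathrm{smax}_i v_i$ their indices; ties are broken by an arbitrary fixed deterministic rule (so the ''second largest'' entry may equal the largest one in value). Problem: There are $T$ rounds. At each round $t$: (1) the learner observes a context $x_t$ in a context space $\mathcal{X}$ and a set of $N_t$ bidders (ads); $N=\max_t N_t$. (2) The learner chooses estimated CTRs $\tilde\rho_t\in[0,1]^{N_t}$. (3) Simultaneously each bidder $i$ chooses a bid $b_{t,i}\in[0,1]$ (contexts and bids may be chosen by an adaptive adversary; bids are chosen without knowing $\tilde\rho_t$). (4) The winner is $i_t=\arg\max_{i\in[N_t]} b_{t,i}\tilde\rho_{t,i}$, the runner-up is $j_t=\arg\mathrm{smax}_{i\in[N_t]} b_{t,i}\tilde\rho_{t,i}$, the payment per click is $d_t=b_{t,j_t}\tilde\rho_{t,j_t}/\tilde\rho_{t,i_t}$; the winner's ad is clicked with probability $\rho_{t,i_t}$, where $\rho_{t,i}\in[0,1]$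 is the true unknown CTR of ad $i$ at round $t$. (5) The learner observes all bids $b_t$ and $c_t\in\{0,1\}$, the click indicator (Bernoulli with mean $\rho_{t,i_t}$), and receives payment $c_td_t$. The regret is $\mathrm{Reg}=\sum_{t=1}^T \mathrm{smax}_{i\in[N_t]} b_{t,i}\rho_{t,i}-\sum_{t=1}^T c_td_t$. Realizability: the learner is given a class $\mathcal{F}$ of functions $f:\mathcal{X}\times[N]\to[0,1]$ containing an unknown $f^*$ with $f^*(x_t,i)=\rho_{t,i}$ for all $t,i$. Algorithm (exponential weights): with learning rate $\eta>0$, at each round $t$ sample $f_t$ from the distribution $q_t$ over $\mathcal{F}$ with $q_{t,f}\propto\exp(-\eta\sum_{s<t}\hat\ell_{s,f})$ (so $q_1$ is uniform); after observing $x_t$ set $\tilde\rho_{t,i}=f_t(x_t,i)$ for all $i\in[N_t]$, run the auction above, and then for every $f\in\mathcal{F}$ define the IPS loss estimator $$\hat\ell_{t,f}=\frac{\mathbb{1}\{i_t=\arg\max_{i\in[N_t]} b_{t,i}f(x_t,i)\}}{p_{t,i_t}}\Big(1-c_t\frac{\mathrm{smax}_{j\in[N_t]} b_{t,j}f(x_t,j)}{f(x_t,i_t)}\Big),$$ where $p_{t,i}=\Pr_{f_t\sim q_t}\{i_t=i\}$. *)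

(* Defs.v *)
From HB Require Import structures.
From mathcomp Require Import all_boot all_order all_algebra.
From mathcomp Require Import reals.
From mathcomp Require Import sequences.
From mathcomp.analysis Require Import exp.
Set Implicit Arguments. Unset Strict Implicit. Unset Printing Implicit Defensive.
Import Order.TTheory GRing.Theory Num.Theory.
Local Open Scope ring_scope.

(* A fixed deterministic tie-breaking rule: [amax n v] is an index of a
   largest entry of the vector (v 0, ..., v (n-1)), and [asmax n v] an index
   of a second-largest entry (the largest among the other indices); when
   n = 1 necessarily asmax = amax = 0.  The rule only looks at the first n
   entries. *)
Record TieRule (R : realType) := {
  amax : nat -> (nat -> R) -> nat;
  asmax : nat -> (nat -> R) -> nat;
  amax_lt : forall n v, (0 < n)%N -> (amax n v < n)%N;
  amax_max : forall n v i, (i < n)%N -> v i <= v (amax n v);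
  asmax_lt : forall n v, (0 < n)%N -> (asmax n v < n)%N;
  asmax_neq : forall n v, (1 < n)%N -> asmax n v != amax n v;
  asmax_max : forall n v i, (i < n)%N -> i != amax n v -> v i <= v (asmax n v);
  amax_ext : forall n v w, (forall i, (i < n)%N -> v i = w i) -> amax n v = amax n w;
  asmax_ext : forall n v w, (forall i, (i < n)%N -> v i = w i) -> asmax n v = asmax n w
}.

Section Auction.
Variables (R : realType) (X : Type) (K : finType).
(* the predictor class F, indexed by K: pred k x i = f_k(x, i) *)
Variables (pred : K -> X -> nat -> R) (kstar : K).
(* N t = number of bidders at round t (t = 0, ..., T-1) *)
Variables (N : nat -> nat) (rule : TieRule R) (eta : R).
(* adaptive adversary: context and bids chosen from the full past history
   (contexts, bids, sampled predictors, clicks); round index = size hist *)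
Definition hist_t := (X * (nat -> R) * K * bool)%type.
Variables (ctx : seq hist_t -> X) (bid : seq hist_t -> nat -> R).

Definition qw (L : K -> R) (k : K) : R :=
  expR (- (eta * L k)) / \sum_(k' : K) expR (- (eta * L k')).

Section Round.
Variable hist : seq hist_t.
Let x := ctx hist.
Let b := bid hist.
Let n := N (size hist).
Definition score (f : K) (i : nat) : R := b i * pred f x i.
Definition winner (f : K) : nat := amax rule n (score f).
Definition runner (f : K) : nat := asmax rule n (score f).
Definition secval (f : K) : R := score f (runner f).
Definition payment (k : K) : R := secval k / pred k x (winner k).
(* instantaneous regret: smax_i b_i rho_i - c d_t *)
Definition inst_regret (k : K) (c : bool) : R := secval kstar - c%:R * payment k.
Definition pwin (L : K -> R) (i : nat) : R :=
  \sum_(k : K | winner k == i) qw L k.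
Definition lhat (L : K -> R) (k : K) (c : bool) (f : K) : R :=
  (winner f == winner k)%:R / pwin L (winner k)
  * (1 - c%:R * secval f / pred f x (winner k)).
Definition click_prob (k : K) : R := pred kstar x (winner k).
Definition round_data (k : K) (c : bool) : hist_t := (x, b, k, c).
End Round.

Fixpoint exp_regret (m : nat) (hist : seq hist_t) (L : K -> R) : R :=
  match m with
  | 0 => 0
  | m'.+1 =>
      \sum_(k : K) qw L k *
        (click_prob hist k *
           (inst_regret hist k true +
            exp_regret m' (rcons hist (round_data hist k true))
              (fun f => L f + lhat hist L k true f))
         + (1 - click_prob hist k) *
           (inst_regret hist k false +
            exp_regret m' (rcons hist (round_data hist k false))
              (fun f => L f + lhat hist L k false f)))
  end.

Definition expected_regret (T : nat) : R := exp_regret T [::] (fun _ => 0).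
End Auction.

(* Main.v *)
Require Import Defs.
From HB Require Import structures.
From mathcomp Require Import all_boot all_order all_algebra.
From mathcomp Require Import reals.
From mathcomp Require Import sequences.
From mathcomp.analysis Require Import exp.
From mathcomp Require Import ring lra.
Import Order.TTheory GRing.Theory Num.Theory.
Local Open Scope ring_scope.

Section Pf.
Variables (R : realType) (X : Type) (K : finType) (pred : K -> X -> nat -> R)
  (kstar : K) (N : nat -> nat) (rule : TieRule R)
  (ctx : seq (hist_t R X K) -> X) (bid : seq (hist_t R X K) -> nat -> R) (eta : R).
Hypothesis hpred : forall k x i, 0 <= pred k x i <= 1.
Hypothesis hbid : forall h i, 0 <= bid h i <= 1.

Local Notation q L := (@qw R K eta L).
Local Notation w h := (winner pred N rule ctx bid h).
Local Notation sv h := (secval pred N rule ctx bid h).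
Local Notation cp h := (click_prob pred kstar N rule ctx bid h).
Local Notation pw h L := (pwin pred N rule eta ctx bid h L).
Local Notation lh h L := (lhat pred N rule eta ctx bid h L).
Local Notation ir h := (inst_regret pred kstar N rule ctx bid h).

Definition rt h f := sv h f / pred f (ctx h) (w h f).
Definition Ex h L (F : K -> bool -> R) :=
  \sum_(k : K) q L k * (cp h k * F k true + (1 - cp h k) * F k false).
Definition W (L : K -> R) := \sum_(k : K) expR (- (eta * L k)).
Definition G L := L kstar + ln (W L) / eta.

Lemma W_gt0 L : 0 < W L.
Proof.
rewrite /W (bigD1 kstar) //=; apply: (lt_le_trans (expR_gt0 (- (eta * L kstar)))).
by rewrite lerDl sumr_ge0 // => k _; apply/ltW/expR_gt0.
Qed.

Lemma q_gt0 L k : 0 < q L k.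
Proof. by rewrite /qw divr_gt0 ?expR_gt0 //; apply: W_gt0. Qed.

Lemma q_sum L : \sum_k q L k = 1.
Proof. rewrite /qw -mulr_suml mulfV //; apply: lt0r_neq0; apply: W_gt0. Qed.

Lemma Ex_le h L F H : (forall k c, F k c <= H k c) -> Ex h L F <= Ex h L H.
Proof.
move=> FH; apply: ler_sum => k _; apply: ler_wpM2l; first exact/ltW/q_gt0.
have /andP[c0 c1] := hpred kstar (ctx h) (w h k).
by apply: lerD; apply: ler_wpM2l => //; rewrite subr_ge0.
Qed.

Lemma Ex_ext h L F H : (forall k c, F k c = H k c) -> Ex h L F = Ex h L H.
Proof. by move=> FH; apply: eq_bigr => k _; rewrite !FH. Qed.

Lemma Ex_add h L F H : Ex h L (fun k c => F k c + H k c) = Ex h L F + Ex h L H.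
Proof. rewrite /Ex -big_split /=; apply: eq_bigr => k _; ring. Qed.

Lemma Ex_scale h L F a : Ex h L (fun k c => a * F k c) = a * Ex h L F.
Proof. rewrite /Ex mulr_sumr; apply: eq_bigr => k _; ring. Qed.

Lemma Ex_const h L b : Ex h L (fun _ _ => b) = b.
Proof.
transitivity (b * \sum_k q L k); last by rewrite q_sum mulr1.
rewrite /Ex mulr_sumr; apply: eq_bigr => k _; ring.
Qed.

Lemma Ex_lin3 h L F1 F2 F3 a :
  Ex h L (fun k c => F1 k c + F2 k c + a * F3 k c)
  = Ex h L F1 + Ex h L F2 + a * Ex h L F3.
Proof. rewrite /Ex mulr_sumr -!big_split /=; apply: eq_bigr => k _; ring. Qed.

Lemma Ex_lin2 h L F H a b :
  Ex h L (fun k c => F k c + (a * H k c + b)) = Ex h L F + (a * Ex h L H + b).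
Proof.
rewrite -[b in RHS](Ex_const h L) /Ex mulr_sumr -!big_split /=.
apply: eq_bigr => k _; ring.
Qed.

Lemma Ex_nc h L F : Ex h L (fun k _ => F k) = \sum_k q L k * F k.
Proof. apply: eq_bigr => k _; ring. Qed.

Lemma Ex_sum h L (H : K -> K -> bool -> R) :
  Ex h L (fun k c => \sum_f H f k c) = \sum_f Ex h L (H f).
Proof.
rewrite /Ex exchange_big /=; apply: eq_bigr => k _.
rewrite !mulr_sumr -big_split /= mulr_sumr; apply: eq_bigr => f _; ring.
Qed.

Section Round.
Variable h : seq (hist_t R X K).
Hypothesis hn : (0 < N (size h))%N.

Lemma w_lt f : (w h f < N (size h))%N.
Proof. exact: amax_lt. Qed.

Lemma sv_ge0 f : 0 <= sv h f.
Proof.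
rewrite /secval /score; apply: mulr_ge0.
  by case/andP: (hbid h (runner pred N rule ctx bid h f)).
by case/andP: (hpred f (ctx h) (runner pred N rule ctx bid h f)).
Qed.

Lemma sv_le f : sv h f <= bid h (w h f) * pred f (ctx h) (w h f).
Proof. rewrite /secval /runner /winner; apply: amax_max; exact: asmax_lt. Qed.

Lemma rt_01 f : 0 <= rt h f <= 1.
Proof.
rewrite /rt; set p := pred f (ctx h) (w h f).
have /andP[p0 p1] := hpred f (ctx h) (w h f).
case: (eqVneq p 0) => [->|pn0]; first by rewrite invr0 mulr0 lexx ler01.
have pp : 0 < p by rewrite lt0r pn0 p0.
rewrite divr_ge0 ?sv_ge0 //= ler_pdivrMr // mul1r.
apply: (le_trans (sv_le f)); rewrite -[X in _ <= X]mul1r ler_wpM2r //.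
by case/andP: (hbid h (w h f)).
Qed.

Lemma sv_star : cp h kstar * rt h kstar = sv h kstar.
Proof.
rewrite /rt /click_prob; set p := pred kstar (ctx h) (w h kstar).
case: (eqVneq p 0) => [p0|pn0]; last by rewrite mulrCA mulfV ?mulr1.
rewrite p0 mul0r; apply/eqP; rewrite eq_le sv_ge0 /=.
by have := sv_le kstar; rewrite -/p p0 mulr0.
Qed.

Lemma lh_eq L k c f :
  lh h L k c f = (w h f == w h k)%:R / pw h L (w h k) * (1 - c%:R * rt h f).
Proof.
rewrite /lhat /rt; case: eqP => [->|_]; first by rewrite mulrA.
by rewrite !mul0r.
Qed.

Lemma pw_sum L i : pw h L i = \sum_k (w h k == i)%:R * q L k.
Proof.
rewrite /pwin big_mkcond; apply: eq_bigr => k _.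
by case: eqP; rewrite ?mul1r ?mul0r.
Qed.

Lemma pw_gt0 L f : 0 < pw h L (w h f).
Proof.
rewrite /pwin (bigD1 f) //=; apply: (lt_le_trans (q_gt0 L f)).
by rewrite lerDl; apply: sumr_ge0 => k _; apply/ltW/q_gt0.
Qed.

Lemma fac01 (c : bool) f : 0 <= 1 - c%:R * rt h f <= 1.
Proof.
have /andP[r0 r1] := rt_01 f.
by case: c => /=; rewrite ?mul1r ?mul0r; apply/andP; split; lra.
Qed.

Lemma lh_ge0 L k c f : 0 <= lh h L k c f.
Proof.
rewrite lh_eq; apply: mulr_ge0; last by case/andP: (fac01 c f).
by rewrite divr_ge0 ?ler0n // ltW // pw_gt0.
Qed.

Lemma lh_sq L k c f :
  lh h L k c f ^+ 2 <= (w h f == w h k)%:R / pw h L (w h k) ^+ 2.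
Proof.
rewrite lh_eq; case: eqP => _; last by rewrite !mul0r expr0n.
have /andP[a0 a1] := fac01 c f.
rewrite !div1r exprMn -exprVn; apply: ler_piMr.
- by rewrite exprn_ge0 // invr_ge0 ltW // pw_gt0.
- by rewrite expr_le1.
Qed.

Lemma Ex_lhat L f : Ex h L (fun k c => lh h L k c f) = 1 - cp h f * rt h f.
Proof.
have pn0 : pw h L (w h f) != 0 by apply: lt0r_neq0; apply: pw_gt0.
rewrite /Ex; transitivity
  (\sum_k (w h k == w h f)%:R * q L k * ((1 - cp h f * rt h f) / pw h L (w h f))).
  apply: eq_bigr => k _; rewrite !lh_eq.
  case: (eqVneq (w h k) (w h f)) => e.
    rewrite /click_prob e /=; field; exact: pn0.
  by rewrite /=; ring.
by rewrite -mulr_suml -pw_sum mulrC divfK.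
Qed.

Lemma Ex_qlh L f a : Ex h L (fun k c => a * lh h L k c f) = a * (1 - cp h f * rt h f).
Proof. rewrite -(Ex_lhat L f) /Ex mulr_sumr; apply: eq_bigr => k _; ring. Qed.

Lemma Ex_inst L : Ex h L (ir h) = sv h kstar - \sum_k q L k * (cp h k * rt h k).
Proof.
transitivity (\sum_k (q L k * sv h kstar - q L k * (cp h k * rt h k))).
  apply: eq_bigr => k _; rewrite /inst_regret /payment /rt /=; ring.
by rewrite sumrB -mulr_suml q_sum mul1r.
Qed.

Lemma unbiased L :
  Ex h L (fun k c => ir h k c + lh h L k c kstar
                      + (-1) * \sum_f q L f * lh h L k c f) = 0.
Proof.
have ES := Ex_sum h L (fun f k c => q L f * lh h L k c f); cbv beta in ES.
have E3 := Ex_lin3 h L (ir h) (fun k c => lh h L k c kstar)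
   (fun k c => \sum_f q L f * lh h L k c f) (-1); cbv beta in E3.
rewrite E3 ES Ex_inst Ex_lhat.
rewrite [X in -1 * X](eq_bigr (fun f => q L f * (1 - cp h f * rt h f))); last by move=> f _; exact: Ex_qlh.
have -> : \sum_f q L f * (1 - cp h f * rt h f)
        = 1 - \sum_k q L k * (cp h k * rt h k).
  rewrite -[in RHS](q_sum L) -sumrB; apply: eq_bigr => k _; ring.
rewrite sv_star; ring.
Qed.

Lemma sum_qp L : \sum_k q L k * (pw h L (w h k))^-1 <= (N (size h))%:R.
Proof.
set n := N (size h).
have -> : \sum_k q L k * (pw h L (w h k))^-1
    = \sum_k \sum_(i < n) (w h k == i)%:R * q L k * (pw h L i)^-1.
  apply: eq_bigr => k _.
  rewrite (bigD1 (Ordinal (w_lt k))) //= eqxx mul1r big1 ?addr0 // => i ne.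
  case: eqP => [e|]; last by rewrite !mul0r.
  have ei : i = Ordinal (w_lt k) by apply: val_inj; rewrite /= e.
  by move: ne; rewrite ei eqxx.
rewrite exchange_big /=.
apply: le_trans (_ : \sum_(i < n) 1 <= _); last by rewrite sumr_const card_ord.
apply: ler_sum => i _; rewrite -mulr_suml -pw_sum.
have := pw_gt0 L; case: (eqVneq (pw h L i) 0) => [->|ne] _.
  by rewrite mul0r ler01.
by rewrite mulfV.
Qed.

Lemma Ex_sq L :
  Ex h L (fun k c => \sum_f q L f * lh h L k c f ^+ 2) <= (N (size h))%:R.
Proof.
apply: le_trans (Ex_le h L _ (fun k c => (pw h L (w h k))^-1) _) _.
  move=> k c.
  apply: le_trans (ler_sum _ (fun f _ => ler_wpM2l (ltW (q_gt0 L f)) (lh_sq L k c f))) _.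
  have pn0 : pw h L (w h k) != 0 by apply: lt0r_neq0; apply: pw_gt0.
  have -> : \sum_f q L f * ((w h f == w h k)%:R / pw h L (w h k) ^+ 2)
          = pw h L (w h k) / pw h L (w h k) ^+ 2.
    rewrite pw_sum mulr_suml; apply: eq_bigr => f _; ring.
  by rewrite expr2 invfM mulrA mulfV // mul1r.
by rewrite Ex_nc sum_qp.
Qed.

End Round.

Lemma exp_bnd (y : R) : 0 <= y -> expR (- y) <= 1 - y + y ^+ 2.
Proof.
move=> y0; have E := expR_ge1Dx y.
have e : expR (- y) * expR y = 1 by rewrite -expRD addNr expR0.
have Q : 0 <= 1 - y + y ^+ 2 by nra.
have H1 : 1 <= (1 - y + y ^+ 2) * expR y.
  apply: le_trans (_ : (1 - y + y ^+ 2) * (1 + y) <= _); last exact: ler_wpM2l.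
  have : 0 <= y ^+ 3 by rewrite exprn_ge0.
  nra.
rewrite -[expR (- y)]mulr1.
apply: le_trans (ler_wpM2l (ltW (expR_gt0 _)) H1) _.
by rewrite mulrCA e mulr1.
Qed.

Lemma single m : #|K| = 1%N -> forall h L,
  (forall j, (j < m)%N -> (1 <= N (size h + j))%N) ->
  exp_regret pred kstar N rule eta ctx bid m h L <= 0.
Proof.
move=> hK; elim: m => [|m IH] h L hN; first by [].
have n0 : (0 < N (size h))%N by have := hN 0%N isT; rewrite addn0.
change (Ex h L (fun k c => ir h k c + exp_regret pred kstar N rule eta ctx bid m
   (rcons h (round_data ctx bid h k c)) (fun f => L f + lh h L k c f)) <= 0).
apply: le_trans (Ex_le h L _ (fun k c => ir h k c) _) _.
  move=> k c.
  have hN' : forall j, (j < m)%N ->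
      (1 <= N (size (rcons h (round_data ctx bid h k c)) + j))%N.
    by move=> j hj; rewrite size_rcons addSnnS; apply: hN.
  have := IH _ (fun f => L f + lh h L k c f) hN'; lra.
have [x hx] := fintype1 hK.
have e : forall k, k = kstar by move=> k; rewrite (hx k) (hx kstar).
rewrite (@Ex_inst h L) (eq_bigr (fun k => q L k * (cp h kstar * rt h kstar))).
  by rewrite -mulr_suml q_sum mul1r (@sv_star h n0) subrr.
by move=> k _; rewrite (e k).
Qed.

Hypothesis eta0 : 0 < eta.

Lemma G_ge0 L : 0 <= G L.
Proof.
rewrite /G.
have : expR (- (eta * L kstar)) <= W L.
  rewrite /W (bigD1 kstar) //= lerDl; apply: sumr_ge0 => k _; apply/ltW/expR_gt0.
rewrite -ler_ln ?posrE ?expR_gt0 ?W_gt0 // expRK => H.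
have : - L kstar <= ln (W L) / eta by rewrite ler_pdivlMr // mulNr mulrC.
lra.
Qed.

Lemma W_step L l :
  W (fun f => L f + l f) = W L * \sum_f q L f * expR (- (eta * l f)).
Proof.
have Wn0 : W L != 0 by apply: lt0r_neq0; apply: W_gt0.
rewrite mulr_sumr; apply: eq_bigr => f _.
rewrite mulrDr opprD expRD /qw -/(W L); field; exact: Wn0.
Qed.

Lemma G_step L l : (forall f, 0 <= l f) ->
  G (fun f => L f + l f) <= G L + l kstar - \sum_f q L f * l f
                            + eta * \sum_f q L f * l f ^+ 2.
Proof.
move=> l0; set z := \sum_f q L f * expR (- (eta * l f)).
set A := \sum_f q L f * l f; set B := \sum_f q L f * l f ^+ 2.
have z0 : 0 < z.
  rewrite /z (bigD1 kstar) //=; apply: (lt_le_trans (mulr_gt0 (q_gt0 L kstar) (expR_gt0 (- (eta * l kstar))))).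
  rewrite lerDl; apply: sumr_ge0 => k _; apply: mulr_ge0; [exact/ltW/q_gt0|exact/ltW/expR_gt0].
have zb : z <= 1 - eta * A + eta ^+ 2 * B.
  apply: le_trans (_ : z <= \sum_f q L f * (1 - eta * l f + (eta * l f) ^+ 2)) _.
    apply: ler_sum => f _; apply: ler_wpM2l; first exact/ltW/q_gt0.
    by apply: exp_bnd; apply: mulr_ge0; [exact: ltW|exact: l0].
  have -> : \sum_f q L f * (1 - eta * l f + (eta * l f) ^+ 2)
      = \sum_f q L f - eta * A + eta ^+ 2 * B.
    rewrite /A /B !mulr_sumr -sumrB -big_split /=; apply: eq_bigr => f _; ring.
  by rewrite q_sum.
have lz : ln z <= z - 1.
  have e1 : 1 + (z - 1) = z by ring.
  have := @le_ln1Dx R (z - 1); rewrite e1; apply; lra.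
have lnW : ln (W (fun f => L f + l f)) = ln (W L) + ln z.
  by rewrite W_step lnM ?posrE ?W_gt0.
have H : ln z / eta <= - A + eta * B.
  by rewrite ler_pdivrMr //; nra.
rewrite /G /= lnW mulrDl; lra.
Qed.

Lemma main m : forall h L, (forall j, (j < m)%N -> (1 <= N (size h + j))%N) ->
  exp_regret pred kstar N rule eta ctx bid m h L
    <= G L + eta * \sum_(j < m) (N (size h + j))%:R.
Proof.
elim: m => [|m IH] h L hN.
  by rewrite /= big_ord0 mulr0 addr0 G_ge0.
have n0 : (0 < N (size h))%N by have := hN 0%N isT; rewrite addn0.
rewrite big_ord_recl addn0.
set S' := \sum_(i < m) _.
have eS : S' = \sum_(i < m) (N (size (rcons h (round_data ctx bid h kstar true)) + i))%:R.
  by apply: eq_bigr => i _; rewrite lift0 size_rcons addSnnS.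
change (Ex h L (fun k c => ir h k c + exp_regret pred kstar N rule eta ctx bid m
   (rcons h (round_data ctx bid h k c)) (fun f => L f + lh h L k c f))
   <= G L + eta * ((N (size h))%:R + S')).
apply: le_trans (Ex_le h L _ (fun k c => (ir h k c + lh h L k c kstar
      + (-1) * \sum_f q L f * lh h L k c f)
      + (eta * (\sum_f q L f * lh h L k c f ^+ 2) + (G L + eta * S'))) _) _.
  move=> k c.
  have eS2 : \sum_(i < m) (N ((size h).+1 + i))%:R = S'.
    by rewrite eS size_rcons.
  have hN' : forall j, (j < m)%N ->
      (1 <= N (size (rcons h (round_data ctx bid h k c)) + j))%N.
    by move=> j hj; rewrite size_rcons addSnnS; apply: hN.
  have H1 := IH _ (fun f => L f + lh h L k c f) hN'.
  rewrite size_rcons eS2 in H1.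
  have H2 := G_step L (lh h L k c) (fun f => @lh_ge0 h n0 L k c f).
  lra.
have E2 := Ex_lin2 h L (fun k c => ir h k c + lh h L k c kstar
      + (-1) * \sum_f q L f * lh h L k c f)
      (fun k c => \sum_f q L f * lh h L k c f ^+ 2) eta (G L + eta * S').
cbv beta in E2; rewrite E2 (@unbiased h n0).
have := @Ex_sq h n0 L; move=> /(ler_wpM2l (ltW eta0)); lra.
Qed.

End Pf.

Theorem theorem1 :
  exists C : nat,
  forall (R : realType) (X : Type) (K : finType)
    (pred : K -> X -> nat -> R) (kstar : K)
    (T : nat) (N : nat -> nat) (rule : TieRule R)
    (ctx : seq (hist_t R X K) -> X) (bid : seq (hist_t R X K) -> nat -> R),
    injective pred ->
    (forall k x i, 0 <= pred k x i <= 1) ->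
    (forall t, (t < T)%N -> (1 <= N t)%N) ->
    (forall h i, 0 <= bid h i <= 1) ->
    let eta := Num.sqrt (ln (#|K|%:R : R) / \sum_(t < T) (N t)%:R) in
    expected_regret pred kstar N rule eta ctx bid T
      <= C%:R * Num.sqrt (\sum_(t < T) (N t)%:R * ln (#|K|%:R : R)).
Proof.
exists 2%N.
move=> R X K pred kstar T N rule ctx bid _ hpred hT hbid.
cbv zeta.
set S := \sum_(t < T) (N t)%:R.
set a := ln (#|K|%:R : R).
set eta := Num.sqrt (a / S).
have etaE : eta = Num.sqrt (a / S) by [].
clearbody eta.
have rhs0 : 0 <= 2%:R * Num.sqrt (\sum_(t < T) (N t)%:R * a).
  by rewrite mulr_ge0 ?sqrtr_ge0.
rewrite /expected_regret.
have hN0 : forall j, (j < T)%N -> (1 <= N (size (@nil (hist_t R X K)) + j))%N.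
  by move=> j hj; exact: hT.
case: (posnP T) => [T0|Tpos].
  by move: rhs0; rewrite T0.
have S0 : 0 < S.
  rewrite /S (bigD1 (Ordinal Tpos)) //=.
  have h1 : 0 < (N 0)%:R :> R by rewrite ltr0n; apply: hT.
  have h2 : 0 <= \sum_(i < T | i != Ordinal Tpos) (N i)%:R :> R by apply: sumr_ge0.
  lra.
have hK1 : (0 < #|K|)%N by apply/card_gt0P; exists kstar.
case hK: (#|K| == 1%N).
  move/eqP: hK => hK.
  exact: le_trans (@single R X K pred kstar N rule ctx bid eta hpred hbid T hK [::] (fun _ => 0) hN0) rhs0.
have K2 : (1 < #|K|)%N by rewrite ltn_neqAle eq_sym hK.
have a0 : 0 < a by rewrite /a ln_gt0 // ltr1n.
have eta0 : 0 < eta by rewrite etaE sqrtr_gt0 divr_gt0.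
have M := @main R X K pred kstar N rule ctx bid eta hpred hbid eta0 T [::] (fun _ => 0) hN0.
rewrite /G /W /= in M.
move: M; under eq_bigr do rewrite mulr0 oppr0 expR0.
have cK : \sum_(k : K) (1 : R) = #|K|%:R by rewrite sumr_const.
rewrite cK add0r -/a.
under eq_bigr do rewrite add0n.
rewrite -/S -mulr_suml -/S => M.
have e2 : eta ^+ 2 = a / S by rewrite etaE sqr_sqrtr // divr_ge0 // ltW.
have Sn0 : S != 0 by apply: lt0r_neq0.
have en0 : eta != 0 by apply: lt0r_neq0.
have sq : Num.sqrt (S * a) = eta * S.
  have -> : S * a = (eta * S) ^+ 2 by rewrite exprMn e2; field.
  by rewrite sqrtr_sqr ger0_norm // mulr_ge0 // ltW.
have ae : a / eta = eta * S.
  have aE : a = eta ^+ 2 * S by rewrite e2 divfK.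
  by rewrite {1}aE; field.
rewrite sq; rewrite ae in M; lra.
Qed.
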